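(* Fix $0<p<1$. For a random fan $\Sigma$ chosen with respect to $T(h,p)$, with high probability $X(\Sigma)$ is singular.
   Context: A ray is a half-line $\rho=\mathbb{R}_{\ge 0}v\subset\mathbb{R}^2$ with $v\in\mathbb{Z}^2\setminus\{0\}$; $u_\rho$ denotes its primitive lattice generator. On $\mathbb{Z}^2$ use the norm $|(x,y)|=\max\{|x|,|y|\}$, and $|\rho|=|u_\rho|$. The completion of a finite set $S$ of rays is the fan with ray set $S$ that is maximal under inclusion among fans with ray set $S$ (its $2$-dimensional cones are spanned by angularly consecutive rays of $S$ at angle less than $\pi$). $T(h,p)$ is the distribution on fans obtained by including each ray $\rho$ with $|\rho|\le h$ independently with probability $p$ and completing. $X(\Sigma)$ is the toric surface of $\Sigma$; it is singular iff some $2$-dimensional cone spanned by rays $\rho,\tau$ has $|\det(u_\rho,u_\tau)|>1$. ''With high probability'' means with probability tending to $1$ as $h\to\infty$. *)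

(* Defs.v *)
From Stdlib Require Import Reals ZArith List Bool.
Import ListNotations.
Open Scope R_scope.

(* A ray is represented by its primitive lattice generator u = (x,y) in Z^2. *)
Definition vec := (Z * Z)%type.

Definition detZ (u v : vec) : Z := (fst u * snd v - snd u * fst v)%Z.

Definition zrange (h : nat) : list Z :=
  map (fun k => (Z.of_nat k - Z.of_nat h)%Z) (seq 0 (2 * h + 1)).

(* primitive generators u_rho of all rays rho with |rho| = max(|x|,|y|) <= h
   (gcd(0,0) = 0 so the zero vector is excluded) *)
Definition rays (h : nat) : list vec :=
  filter (fun u => Z.eqb (Z.gcd (fst u) (snd u)) 1) (list_prod (zrange h) (zrange h)).

(* all sub-lists (= all subsets, since rays h has no duplicates) *)
Fixpoint powerlist {A : Type} (l : list A) : list (list A) :=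
  match l with
  | nil => [nil]
  | x :: t => map (cons x) (powerlist t) ++ powerlist t
  end.

Definition memb (u : vec) (S : list vec) : bool :=
  existsb (fun w => Z.eqb (fst w) (fst u) && Z.eqb (snd w) (snd u)) S.

(* u, v span a 2-dimensional cone of the completion of S: v follows u
   counterclockwise at an angle in (0, pi) (det u v > 0) and no ray of S lies
   strictly between them. *)
Definition is_cone2b (S : list vec) (u v : vec) : bool :=
  memb u S && memb v S && Z.ltb 0 (detZ u v) &&
  forallb (fun w => negb (Z.ltb 0 (detZ u w) && Z.ltb 0 (detZ w v))) S.

(* X(Sigma) singular: some 2-dim cone of the completion has |det| > 1 *)
Definition singular_completion (S : list vec) : bool :=
  existsb (fun u => existsb (fun v =>
     is_cone2b S u v && Z.ltb 1 (Z.abs (detZ u v))) S) S.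

(* probability under T(h,p) that X(Sigma) is singular *)
Definition prob_singular (p : R) (h : nat) : R :=
  let N := length (rays h) in
  fold_right Rplus 0
    (map (fun S => if singular_completion S
                   then p ^ length S * (1 - p) ^ (N - length S) else 0)
         (powerlist (rays h))).

(* Main.v *)
Require Import Defs.
From Stdlib Require Import Reals ZArith List Lia Lra.
Import ListNotations.
Open Scope R_scope.

Fixpoint Ex (p : R) (l : list vec) (f : list vec -> R) : R :=
  match l with
  | nil => f nil
  | x :: t => p * Ex p t (fun S => f (x :: S)) + (1 - p) * Ex p t f
  end.

Definition sumR (l : list R) := fold_right Rplus 0 l.

Lemma sumR_app l1 l2 : sumR (l1 ++ l2) = sumR l1 + sumR l2.
Proof. induction l1; simpl; [ring| unfold sumR in *; simpl; rewrite IHl1; ring]. Qed.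

Lemma sumR_scal {A} c (g : A -> R) l : sumR (map (fun x => c * g x) l) = c * sumR (map g l).
Proof. induction l; unfold sumR in *; simpl; [ring| rewrite IHl; ring]. Qed.

Lemma powerlist_len (l S : list vec) : In S (powerlist l) -> (length S <= length l)%nat.
Proof.
  revert S; induction l as [|x t IH]; simpl; intros S H.
  - destruct H as [<-|[]]; simpl; lia.
  - apply in_app_iff in H as [H|H].
    + apply in_map_iff in H as [S' [<- H]]. simpl. specialize (IH _ H). lia.
    + specialize (IH _ H). lia.
Qed.

Definition W p (l : list vec) f :=
  sumR (map (fun S => p ^ length S * (1 - p) ^ (length l - length S) * f S) (powerlist l)).

Lemma W_Ex p l f : W p l f = Ex p l f.
Proof.
  revert f; induction l as [|x t IH]; intros f.
  - unfold W, sumR; simpl; ring.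
  - unfold W. simpl powerlist. rewrite map_app, sumR_app, map_map. simpl Ex.
    rewrite <- IH, <- IH. unfold W. f_equal.
    + rewrite <- sumR_scal. f_equal. apply map_ext. intros S. simpl. ring.
    + rewrite <- sumR_scal. f_equal. apply map_ext_in. intros S HS.
      apply powerlist_len in HS. simpl length.
      rewrite Nat.sub_succ_l by lia. simpl. ring.
Qed.

Lemma Ex_one_minus p l f : Ex p l (fun S => 1 - f S) = 1 - Ex p l f.
Proof.
  revert f; induction l as [|x t IH]; intros f; simpl; [ring|].
  rewrite (IH (fun S => f (x :: S))), IH. ring.
Qed.

Lemma Ex_le_const p l f c : 0 <= p <= 1 ->
  (forall S, incl S l -> f S <= c) -> Ex p l f <= c.
Proof.
  intros Hp; revert f; induction l as [|x t IH]; intros f Hf; simpl.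
  - apply Hf. intros a [].
  - assert (H1 : Ex p t (fun S => f (x :: S)) <= c).
    { apply IH. intros S HS. apply Hf. intros a [<-|Ha]; [left; auto| right; auto]. }
    assert (H2 : Ex p t f <= c).
    { apply IH. intros S HS. apply Hf. intros a Ha; right; auto. }
    apply Rle_trans with (p * c + (1 - p) * c); [|lra].
    apply Rplus_le_compat; apply Rmult_le_compat_l; lra.
Qed.

Lemma Ex_ge_const p l f c : 0 <= p <= 1 ->
  (forall S, c <= f S) -> c <= Ex p l f.
Proof.
  intros Hp; revert f; induction l as [|x t IH]; intros f Hf; simpl.
  - apply Hf.
  - assert (H1 := IH (fun S => f (x :: S)) (fun S => Hf _)).
    assert (H2 := IH f Hf).
    apply Rle_trans with (p * c + (1 - p) * c); [lra|].
    apply Rplus_le_compat; apply Rmult_le_compat_l; lra.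
Qed.

Lemma phaseA p l1 l2 f B : 0 <= p <= 1 ->
  (forall T, incl T l1 -> Ex p l2 (fun S => f (T ++ S)) <= B) ->
  Ex p (l1 ++ l2) f <= B.
Proof.
  intros Hp; revert f; induction l1 as [|x t IH]; intros f Hf; simpl.
  - apply (Hf nil). intros a [].
  - assert (H1 : Ex p (t ++ l2) (fun S => f (x :: S)) <= B).
    { apply IH. intros T HT. apply (Hf (x :: T)).
      intros a [<-|Ha]; [left; auto| right; auto]. }
    assert (H2 : Ex p (t ++ l2) f <= B).
    { apply IH. intros T HT. apply Hf. intros a Ha; right; auto. }
    apply Rle_trans with (p * B + (1 - p) * B); [|lra].
    apply Rplus_le_compat; apply Rmult_le_compat_l; lra.
Qed.

Fixpoint trl (y : Z) (m : nat) : list vec :=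
  match m with
  | O => nil
  | S m' => (1, y)%Z :: (1, y + 1)%Z :: (1, y + 2)%Z :: trl (y + 3)%Z m'
  end.

Definition Pat (y : Z) (m : nat) (S : list vec) : Prop :=
  exists j, (j < m)%nat /\ In (1, y + 3 * Z.of_nat j)%Z S /\
    In (1, y + 3 * Z.of_nat j + 2)%Z S /\ ~ In (1, y + 3 * Z.of_nat j + 1)%Z S.

Lemma phaseB p (Hp : 0 <= p <= 1) : forall m y r g,
  NoDup (trl y m ++ r) -> (forall S, 0 <= g S <= 1) ->
  (forall S, incl S (trl y m ++ r) -> Pat y m S -> g S = 0) ->
  Ex p (trl y m ++ r) g <= (1 - p * (1 - p) * p) ^ m.
Proof.
  induction m as [|m IH]; intros y r g Hnd Hg Hz.
  - simpl. apply Ex_le_const; auto. intros; apply Hg.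
  - set (R := trl (y + 3) m ++ r).
    change (trl y (S m) ++ r) with ((1, y)%Z :: (1, y + 1)%Z :: (1, y + 2)%Z :: R) in *.
    set (a := (1, y)%Z) in *. set (b := (1, y + 1)%Z) in *. set (c := (1, y + 2)%Z) in *.
    set (X := (1 - p * (1 - p) * p) ^ m).
    assert (Hgen : forall xs, (forall v, In v xs -> v = a \/ v = b \/ v = c) ->
               Ex p R (fun S => g (xs ++ S)) <= X).
    { intros xs Hxs. apply IH.
      - apply NoDup_cons_iff in Hnd as [_ Hnd].
        apply NoDup_cons_iff in Hnd as [_ Hnd].
        apply NoDup_cons_iff in Hnd as [_ Hnd]. exact Hnd.
      - intros; apply Hg.
      - intros L HS [j [Hj [H1 [H2 H3]]]]. apply Hz.
        + intros v Hv. apply in_app_iff in Hv as [Hv|Hv].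
          * destruct (Hxs v Hv) as [ -> | [ -> | -> ] ]; simpl; auto.
          * right; right; right; auto.
        + exists (Datatypes.S j). rewrite Nat2Z.inj_succ. split; [lia|].
          replace (y + 3 * Z.succ (Z.of_nat j))%Z with (y + 3 + 3 * Z.of_nat j)%Z by lia.
          split; [apply in_or_app; right; auto|].
          split; [replace (y + 3 + 3 * Z.of_nat j + 2)%Z with (y + 3 + 3 * Z.of_nat j + 2)%Z by lia;
                  apply in_or_app; right; auto|].
          intros Hin. apply in_app_iff in Hin as [Hin|Hin]; [|tauto].
          destruct (Hxs _ Hin) as [E|[E|E]]; unfold a, b, c in E; apply (f_equal snd) in E; cbn [snd] in E; lia. }
    assert (Hac : Ex p R (fun S => g (a :: c :: S)) <= 0).
    { apply Ex_le_const; auto. intros S HS. right. apply Hz.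
      - intros v [<-|[<-|Hv]]; simpl; auto.
      - exists O. simpl. replace (y + 0)%Z with y by lia.
        split; [lia|]. split; [left; auto|]. split; [right; left; auto|].
        intros [E|[E|E]].
        + apply (f_equal snd) in E; unfold a in E; cbn [snd] in E; lia.
        + apply (f_equal snd) in E; unfold c in E; cbn [snd] in E; lia.
        + apply NoDup_cons_iff in Hnd as [_ Hnd].
          apply NoDup_cons_iff in Hnd as [Hb _].
          apply Hb. right. apply HS. exact E. }
    simpl Ex.
    pose proof (Hgen [a; b; c]) as E1. pose proof (Hgen [a; b]) as E2.
    pose proof (Hgen [a]) as E4.
    pose proof (Hgen [b; c]) as E5. pose proof (Hgen [b]) as E6.
    pose proof (Hgen [c]) as E7. pose proof (Hgen nil) as E8.
    simpl in E1, E2, E4, E5, E6, E7, E8.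
    specialize (E1 ltac:(intros v Hv; simpl in Hv; decompose [or] Hv; try subst v; auto; contradiction)). specialize (E2 ltac:(intros v Hv; simpl in Hv; decompose [or] Hv; try subst v; auto; contradiction)).
    specialize (E4 ltac:(intros v Hv; simpl in Hv; decompose [or] Hv; try subst v; auto; contradiction)). specialize (E5 ltac:(intros v Hv; simpl in Hv; decompose [or] Hv; try subst v; auto; contradiction)).
    specialize (E6 ltac:(intros v Hv; simpl in Hv; decompose [or] Hv; try subst v; auto; contradiction)). specialize (E7 ltac:(intros v Hv; simpl in Hv; decompose [or] Hv; try subst v; auto; contradiction)).
    specialize (E8 ltac:(intros v Hv; simpl in Hv; decompose [or] Hv; try subst v; auto; contradiction)).
    apply Rle_trans with
      (p * (p * (p * X + (1 - p) * X) + (1 - p) * (p * 0 + (1 - p) * X)) +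
       (1 - p) * (p * (p * X + (1 - p) * X) + (1 - p) * (p * X + (1 - p) * X))).
    + repeat (apply Rplus_le_compat || (apply Rmult_le_compat_l; [lra|])); assumption.
    + simpl. unfold X. lra.
Qed.

Lemma zrange_in h z : In z (zrange h) -> (- Z.of_nat h <= z <= Z.of_nat h)%Z.
Proof.
  unfold zrange. intros H. apply in_map_iff in H as [k [<- Hk]].
  apply in_seq in Hk. lia.
Qed.

Lemma rays_in h w : In w (rays h) ->
  (- Z.of_nat h <= fst w <= Z.of_nat h)%Z /\ (- Z.of_nat h <= snd w <= Z.of_nat h)%Z.
Proof.
  unfold rays. intros H. apply filter_In in H as [H _].
  destruct w as [x z]. apply in_prod_iff in H as [H1 H2].
  split; apply zrange_in; auto.
Qed.

Lemma memb_In u S : In u S -> memb u S = true.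
Proof.
  intros H. unfold memb. apply existsb_exists. exists u. split; auto.
  rewrite !Z.eqb_refl. reflexivity.
Qed.

Lemma sing h S y : incl S (rays h) -> In (1, y)%Z S -> In (1, y + 2)%Z S ->
  ~ In (1, y + 1)%Z S -> (Z.of_nat h + 2 <= 2 * y)%Z -> singular_completion S = true.
Proof.
  intros Hinc Ha Hc Hb Hy. unfold singular_completion.
  apply existsb_exists. exists (1, y)%Z. split; auto.
  apply existsb_exists. exists (1, y + 2)%Z. split; auto.
  unfold is_cone2b. rewrite (memb_In _ _ Ha), (memb_In _ _ Hc).
  unfold detZ; cbn [fst snd].
  replace (1 * (y + 2) - y * 1)%Z with 2%Z by ring.
  apply andb_true_intro; split; [|reflexivity].
  apply andb_true_intro; split; [reflexivity|].
  apply forallb_forall. intros [x z] Hw.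
  destruct (rays_in _ _ (Hinc _ Hw)) as [Hx Hz]. cbn [fst snd] in *.
  rewrite Z.mul_1_l, Z.mul_1_r.
  destruct (Z.ltb_spec 0 (z - y * x)); [|reflexivity].
  destruct (Z.ltb_spec 0 (x * (y + 2) - z)); [|reflexivity].
  exfalso.
  assert (x = 1)%Z by nia. subst x.
  assert (z = y + 1)%Z by lia. subst z. contradiction.
Qed.

Lemma trl_in y m j : (j < m)%nat -> In (1, y + 3 * Z.of_nat j + 1)%Z (trl y m).
Proof.
  revert y j; induction m as [|m IH]; intros y j Hj; [lia|].
  destruct j as [|j].
  - cbn [trl In]. right; left. f_equal. lia.
  - cbn [trl In]. right; right; right.
    replace (y + 3 * Z.of_nat (S j) + 1)%Z with (y + 3 + 3 * Z.of_nat j + 1)%Z by lia.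
    apply IH. lia.
Qed.

Lemma NoDup_prod (A B : Type) (l1 : list A) (l2 : list B) :
  NoDup l1 -> NoDup l2 -> NoDup (list_prod l1 l2).
Proof.
  intros H1 H2; induction H1 as [|x t Hx Ht IH]; simpl; [constructor|].
  apply NoDup_app; auto.
  - apply NoDup_map_NoDup_ForallPairs; auto.
    intros a b _ _ E. injection E; auto.
  - intros [u v] Hin Hin2. apply in_map_iff in Hin as [w [E _]]. injection E as <- _.
    apply in_prod_iff in Hin2 as [Hin2 _]. contradiction.
Qed.

Lemma NoDup_rays h : NoDup (rays h).
Proof.
  unfold rays. apply NoDup_filter. unfold zrange.
  assert (NoDup (map (fun k : nat => (Z.of_nat k - Z.of_nat h)%Z) (seq 0 (2 * h + 1)))).
  { apply NoDup_map_NoDup_ForallPairs; [|apply seq_NoDup].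
    intros a b _ _ E. lia. }
  apply NoDup_prod; auto.
Qed.

Lemma prod_app (A B : Type) (l1 l2 : list A) (l : list B) :
  list_prod (l1 ++ l2) l = list_prod l1 l ++ list_prod l2 l.
Proof. induction l1; simpl; auto. rewrite IHl1, app_assoc. auto. Qed.

Lemma trl_map H : forall m a,
  map (fun z => (1, z)%Z) (map (fun k : nat => (Z.of_nat k - H)%Z) (seq a (3 * m))) =
  trl (Z.of_nat a - H) m.
Proof.
  induction m as [|m IH]; intros a; [reflexivity|].
  replace (3 * S m)%nat with (S (S (S (3 * m)))) by lia. cbn [seq map trl].
  rewrite IH. repeat (apply f_equal2; [apply f_equal2; [reflexivity| lia] |]). f_equal; lia.
Qed.

Lemma decomp h m : (6 * m <= h)%nat -> exists pre post,
  rays h = pre ++ trl (Z.of_nat h + 1 - 3 * Z.of_nat m) m ++ post.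
Proof.
  intros Hm. destruct h as [|h'].
  { assert (m = 0%nat) by lia. subst. exists (rays 0), nil. change (trl _ 0 ++ []) with (@nil vec). rewrite app_nil_r. auto. }
  set (h := S h') in *.
  assert (H1 : In 1%Z (zrange h)).
  { unfold zrange. apply in_map_iff. exists (S h). split; [lia|]. apply in_seq. lia. }
  apply in_split in H1 as [Xl [Xr HX]].
  assert (E : list_prod (zrange h) (zrange h) =
     list_prod Xl (zrange h) ++ map (fun y => (1, y)%Z) (zrange h) ++ list_prod Xr (zrange h)).
  { rewrite HX at 1. rewrite prod_app. reflexivity. }
  assert (E2 : zrange h =
     map (fun k : nat => (Z.of_nat k - Z.of_nat h)%Z) (seq 0 (2 * h + 1 - 3 * m)) ++
     map (fun k : nat => (Z.of_nat k - Z.of_nat h)%Z) (seq (2 * h + 1 - 3 * m) (3 * m))).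
  { unfold zrange. rewrite <- map_app.
    replace (2 * h + 1)%nat with ((2 * h + 1 - 3 * m) + 3 * m)%nat at 1 by lia.
    rewrite seq_app. reflexivity. }
  assert (Hf : forall l, filter (fun u : vec => Z.eqb (Z.gcd (fst u) (snd u)) 1)
               (map (fun y => (1, y)%Z) l) = map (fun y => (1, y)%Z) l).
  { induction l; [reflexivity|]. cbn [filter map fst snd]. rewrite Z.gcd_1_l. rewrite Z.eqb_refl. rewrite IHl. reflexivity. }
  exists (filter (fun u : vec => Z.eqb (Z.gcd (fst u) (snd u)) 1) (list_prod Xl (zrange h)) ++
          map (fun y => (1, y)%Z) (map (fun k : nat => (Z.of_nat k - Z.of_nat h)%Z) (seq 0 (2 * h + 1 - 3 * m)))).
  exists (filter (fun u : vec => Z.eqb (Z.gcd (fst u) (snd u)) 1) (list_prod Xr (zrange h))).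
  unfold rays. rewrite E, !filter_app, Hf.
  rewrite E2 at 2. rewrite map_app, trl_map.
  replace (Z.of_nat (2 * h + 1 - 3 * m) - Z.of_nat h)%Z with (Z.of_nat h + 1 - 3 * Z.of_nat m)%Z by lia.
  rewrite !app_assoc. reflexivity.
Qed.

Lemma NoDup_disj (A : Type) (l1 l2 : list A) x : NoDup (l1 ++ l2) -> In x l1 -> In x l2 -> False.
Proof.
  induction l1 as [|a t IH]; simpl; intros Hnd H1 H2; [auto|].
  apply NoDup_cons_iff in Hnd as [Ha Hnd]. destruct H1 as [<-|H1].
  - apply Ha, in_or_app; auto.
  - eauto.
Qed.

Definition ind (S : list vec) : R := if singular_completion S then 1 else 0.

Lemma prob_Ex p h : prob_singular p h = Ex p (rays h) ind.
Proof.
  rewrite <- W_Ex. unfold prob_singular, W, sumR. cbv zeta. f_equal.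
  apply map_ext. intros S. unfold ind. destruct (singular_completion S); ring.
Qed.

Lemma key p h : 0 < p < 1 ->
  Rabs (prob_singular p h - 1) <= (1 - p * (1 - p) * p) ^ (h / 6).
Proof.
  intros Hp. set (m := (h / 6)%nat).
  assert (Hm : (6 * m <= h)%nat) by (apply Nat.Div0.mul_div_le).
  set (g := fun S => 1 - ind S).
  assert (Hg : Ex p (rays h) g = 1 - prob_singular p h).
  { unfold g. rewrite Ex_one_minus, prob_Ex. reflexivity. }
  assert (Hg0 : 0 <= Ex p (rays h) g).
  { apply Ex_ge_const; [lra|]. intros S. unfold g, ind. destruct (singular_completion S); lra. }
  replace (prob_singular p h - 1) with (- Ex p (rays h) g) by lra.
  rewrite Rabs_Ropp, Rabs_right by lra.
  destruct (decomp h m Hm) as [pre [post Hd]].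
  pose proof (NoDup_rays h) as Hnd. rewrite Hd in Hnd |- *.
  apply phaseA; [lra|]. intros T HT.
  apply (phaseB p ltac:(lra) m _ post (fun S => g (T ++ S))).
  - eapply NoDup_app_remove_l; eauto.
  - intros S. unfold g, ind. destruct (singular_completion (T ++ S)); lra.
  - intros S HS [j [Hj [H1 [H2 H3]]]].
    unfold g, ind.
    rewrite (sing h (T ++ S) (Z.of_nat h + 1 - 3 * Z.of_nat m + 3 * Z.of_nat j)).
    + ring.
    + rewrite Hd. intros v Hv. apply in_app_iff in Hv as [Hv|Hv].
      * apply in_or_app; left; auto.
      * apply in_or_app; right; auto.
    + apply in_or_app; right; auto.
    + apply in_or_app; right. replace (Z.of_nat h + 1 - 3 * Z.of_nat m + 3 * Z.of_nat j + 2)%Z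
        with (Z.of_nat h + 1 - 3 * Z.of_nat m + 3 * Z.of_nat j + 2)%Z by lia. exact H2.
    + intros Hin. apply in_app_iff in Hin as [Hin|Hin]; [|contradiction].
      apply (NoDup_disj _ pre (trl (Z.of_nat h + 1 - 3 * Z.of_nat m) m ++ post)
               (1, Z.of_nat h + 1 - 3 * Z.of_nat m + 3 * Z.of_nat j + 1)%Z Hnd).
      * apply HT; auto.
      * apply in_or_app; left. apply trl_in; auto.
    + lia.
Qed.

Theorem mainTheorem2 (p : R) (hp0 : 0 < p) (hp1 : p < 1) :
  Un_cv (fun h => prob_singular p h) 1.
Proof.
  assert (Hq : 0 < p * (1 - p) * p < 1).
  { split.
    - apply Rmult_lt_0_compat; [apply Rmult_lt_0_compat|]; lra.
    - assert (p * (1 - p) < 1) by nra. nra. }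
  intros eps He.
  destruct (pow_lt_1_zero (1 - p * (1 - p) * p) ltac:(rewrite Rabs_right; lra) eps He) as [N HN].
  exists (6 * N)%nat. intros n Hn. unfold R_dist.
  eapply Rle_lt_trans; [apply key; lra|].
  eapply Rle_lt_trans; [apply Rle_abs|]. apply HN.
  unfold ge in *. rewrite <- (Nat.div_mul N 6) by lia.
  apply Nat.Div0.div_le_mono. lia.
Qed.
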